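(* Let $\Omega$ be a Cantor group with identity $e$ and let $T$ be a minimal translation of $\Omega$. Then for every limit-periodic potential $d\in\ell^\infty(\mathbb{Z})$ with $\mathrm{hull}(d)\cong\Omega$ (as topological groups), there exists $f\in C(\Omega,\mathbb{R})$ such that $f(T^n(e))=d_n$ for every $n\in\mathbb{Z}$.
   Context: A Cantor group is a totally disconnected compact abelian topological group without isolated points. A translation of a topological group $\Omega$ is a map $T(\omega)=\omega\cdot\omega_0$ for some fixed $\omega_0\in\Omega$; it is minimal if $\{T^n(\omega):n\in\mathbb{Z}\}$ is dense in $\Omega$ for every $\omega$. $\sigma$ is the left shift on $\ell^\infty(\mathbb{Z})$ (sup norm), $(\sigma d)_n=d_{n+1}$, and $\mathrm{hull}(d)$ is the closure of $\{\sigma^k d:k\in\mathbb{Z}\}$. A potential is periodic if its shift orbit is finite, and limit-periodic if it lies in the $\ell^\infty$-closure of the periodic potentials. For limit-periodic $d$, $\mathrm{hull}(d)$ is compact and carries a unique topological group structure with identity $d$ such that $k\mapsto\sigma^k(d)$ is a homomorphism $\mathbb{Z}\to\mathrm{hull}(d)$. *)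

(* Defs.v *)
From HB Require Import structures.
From mathcomp Require Import all_boot all_order all_algebra.
From mathcomp Require Import all_classical all_reals all_analysis.
Set Implicit Arguments. Unset Strict Implicit. Unset Printing Implicit Defensive.
Import Order.TTheory GRing.Theory Num.Theory.
Local Open Scope classical_set_scope.
Local Open Scope ring_scope.

Definition cantor_group (Om : topologicalZmodType) : Prop :=
  [/\ compact [set: Om], totally_disconnected [set: Om]
    & forall x : Om, ~ open [set x]].

(* n-th power of the translation T(w) = w + w0, for n : int. *)
Definition transl_pow (Om : zmodType) (w0 : Om) (n : int) (w : Om) : Om :=
  w + w0 *~ n.

Definition minimal_translation (Om : topologicalZmodType) (w0 : Om) : Prop :=
  forall w : Om, closure [set transl_pow w0 n w | n in [set: int]] = [set: Om].

Notation seqZ R := {uniform int -> R^o}.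

(* sigma^k d, where (sigma d)_n = d_{n+1} *)
Definition zshift (R : realType) (k : int) (d : seqZ R) : seqZ R :=
  fun n => d (n + k).

Definition linfty (R : realType) (d : int -> R) : Prop :=
  exists M : R, forall n, `|d n| <= M.

Definition periodic (R : realType) (d : seqZ R) : Prop :=
  finite_set [set zshift k d | k in [set: int]].

Definition limit_periodic (R : realType) (d : seqZ R) : Prop :=
  forall e : R, 0 < e -> exists p : seqZ R,
    periodic p /\ forall n, `|d n - p n| <= e.

Definition hull (R : realType) (d : seqZ R) : set (seqZ R) :=
  closure [set zshift k d | k in [set: int]].

(* Main.v *)
Require Import Defs.
From HB Require Import structures.
From mathcomp Require Import all_boot all_order all_algebra.
From mathcomp Require Import all_classical all_reals all_analysis.
From mathcomp Require Import lra ring.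
Import Order.TTheory GRing.Theory Num.Theory.
Local Open Scope classical_set_scope.
Local Open Scope ring_scope.
Set Implicit Arguments. Unset Strict Implicit. Unset Printing Implicit Defensive.

Lemma cont_subr (Om : topologicalZmodType) (c : Om) : continuous (fun x : Om => x - c).
Proof.
move=> x; apply: (@continuous_comp _ _ _ (fun x => (x, c)) (fun p : Om * Om => p.1 - p.2)).
  by apply: cvg_pair; [exact: cvg_id | exact: cvg_cst].
exact: sub_continuous.
Qed.

Lemma cont_rsub (Om : topologicalZmodType) (c : Om) : continuous (fun x : Om => c - x).
Proof.
move=> x; apply: (@continuous_comp _ _ _ (fun x => (c, x)) (fun p : Om * Om => p.1 - p.2)).
  by apply: cvg_pair; [exact: cvg_cst | exact: cvg_id].
exact: sub_continuous.
Qed.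

Lemma img_closure (S T : topologicalType) (f : S -> T) (A : set S) (B : set T) :
  continuous f -> closed B -> (forall a, A a -> B (f a)) ->
  forall x, closure A x -> B (f x).
Proof.
move=> cf cB AB x clx.
have cP : closed (f @^-1` B) by exact: (proj1 (continuous_closedP f) cf B cB).
have : closure A `<=` closure (f @^-1` B) by apply: closureS => y /AB.
by move=> /(_ x clx); rewrite -(closure_id _).1.
Qed.

Definition subgrp (Om : zmodType) (U : set Om) := U 0 /\ forall x y, U x -> U y -> U (x - y).

Lemma closure_subgrp (Om : topologicalZmodType) (S : set Om) :
  subgrp S -> subgrp (closure S).
Proof.
move=> [S0 Ssub]; split; first exact: subset_closure.
have step1 : forall s x, S s -> closure S x -> closure S (x - s).
  move=> s x Ss; apply: (img_closure (f := fun x => x - s)) => //.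
  - exact: cont_subr.
  - exact: closed_closure.
  - by move=> a Sa; apply: subset_closure; apply: Ssub.
move=> x y cx; apply: (img_closure (f := fun y => x - y)) => //.
- exact: cont_rsub.
- exact: closed_closure.
- by move=> a Sa; apply: step1.
Qed.

Lemma subgrpN (Om : zmodType) (U : set Om) x : subgrp U -> U x -> U (- x).
Proof. by move=> [U0 Us] Ux; rewrite -sub0r; apply: Us. Qed.

Lemma subgrpD (Om : zmodType) (U : set Om) x y : subgrp U -> U x -> U y -> U (x + y).
Proof. by move=> sU Ux Uy; rewrite -(opprK y); apply: sU.2 => //; apply: subgrpN. Qed.

Lemma subgrpMz (Om : zmodType) (U : set Om) x (m : int) : subgrp U -> U x -> U (x *~ m).
Proof.
move=> sU Ux.
have hn : forall n : nat, U (x *+ n).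
  elim=> [|n IH]; first by rewrite mulr0n; exact: sU.1.
  by rewrite mulrS; apply: subgrpD.
case: m => n; first exact: hn.
by rewrite NegzE mulrNz; apply: subgrpN => //; exact: hn.
Qed.
Lemma dense_a (R : realType) (Om : topologicalType) (d : seqZ R) (phi : seqZ R -> Om)
  (psi : Om -> seqZ R) (a : int -> Om) :
  {within hull d, continuous phi} -> (forall w, hull d (psi w)) ->
  (forall w, phi (psi w) = w) -> (forall k, phi (zshift k d) = a k) ->
  forall w, closure (range a) w.
Proof.
move=> cphi hpsi pp ha w B Bw.
have := (@subspace_continuousP _ (hull d) _ phi).1 cphi (psi w) (hpsi w).
rewrite pp => /(_ B Bw) hN.
have [y [[k _ <-] Hy]] := hpsi w _ hN.
exists (a k); split; first by exists k.
rewrite -ha; apply: Hy; apply: subset_closure; by exists k.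
Qed.

Lemma closed_C (R : realType) (d : seqZ R) (e : R) :
  closed [set x : seqZ R | forall n, `|x n - d n| <= e].
Proof.
move=> x clx n; rewrite leNgt; apply/negP => hlt.
set del := `|x n - d n| - e.
have del0 : 0 < del by rewrite subr_gt0.
have hN : nbhs x [set h : seqZ R | forall y, [set: int] y -> (fun p : R^o * R^o => ball p.1 del p.2) (x y, h y)].
  apply/uniform_nbhs; exists (fun p : R^o * R^o => ball p.1 del p.2); split => //.
  by rewrite -entourage_from_ballE; exists del.
have [h [Ch Bh]] := clx _ hN.
have := Bh n I; rewrite /= -ball_normE /= => hb.
have := Ch n.
have : `|x n - d n| <= `|x n - h n| + `|h n - d n|.
  by rewrite (le_trans _ (ler_normD _ _)) // addrA subrK.
rewrite /del in hb; lra.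
Qed.

Lemma hom_int (Om : zmodType) (g : int -> Om) :
  (forall j k, g (j + k) = g j + g k) -> forall k, g k = g 1 *~ k.
Proof.
move=> h.
have g0 : g 0 = 0.
  by have := h 0 0; rewrite addr0 => /(congr1 (fun x => x - g 0)); rewrite subrr addrK.
have hn : forall n : nat, g n = g 1 *~ n.
  elim=> [|n IH]; first by rewrite g0.
  by rewrite -addn1 PoszD h IH mulrzDr mulr1z.
case=> n; first exact: hn.
have := h (Negz n) n.+1; rewrite NegzE subrr g0 => /esym/eqP.
by rewrite addr_eq0 => /eqP ->; rewrite hn mulrNz.
Qed.

Lemma period_exists (R : realType) (p : seqZ R) : Defs.periodic p ->
  exists L : int, L != 0 /\ forall n, p (n + L) = p n.
Proof.
move=> fp; apply: contrapT => hne.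
have inj : {in ((fun k : nat => zshift k%:Z p) @^-1` [set zshift k p | k in [set: int]]) &, injective (fun k : nat => zshift k%:Z p)}.
  move=> j k _ _ /= hjk; apply/eqP; rewrite -eqz_nat; apply: contrapT => /negP hjk'.
  apply: hne; exists (j%:Z - k%:Z); split; first by rewrite subr_eq0.
  move=> n; have := congr1 (fun f : seqZ R => f (n - k%:Z)) hjk.
  rewrite /zshift /= => hh; rewrite -[in RHS](subrK k%:Z n) -hh; congr p; ring.
have := finite_preimage inj fp.
have -> : (fun k : nat => zshift k%:Z p) @^-1` [set zshift k p | k in [set: int]] = [set: nat].
  by apply/seteqP; split => // k _; exists k.
exact: infinite_nat.
Qed.

Lemma open_transl (Om : topologicalZmodType) (U : set Om) (x : Om) :
  open U -> open [set y | U (y - x)].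
Proof.
move=> oU; have -> : [set y | U (y - x)] = (fun y => y - x) @^-1` U by [].
by apply: open_comp => // y _; apply: cont_subr.
Qed.

Lemma closed_transl (Om : topologicalZmodType) (U : set Om) (x : Om) :
  closed U -> closed [set y | U (y - x)].
Proof.
move=> cU; have -> : [set y | U (y - x)] = (fun y => y - x) @^-1` U by [].
exact: (proj1 (continuous_closedP _) (@cont_subr _ x) U cU).
Qed.

Lemma dense_w0 (Om : topologicalZmodType) (w0 : Om) (U : set Om) (x : Om) :
  minimal_translation w0 -> open U -> U 0 -> exists s : int, U (w0 *~ s - x).
Proof.
move=> hm oU U0.
have : closure [set transl_pow w0 n 0 | n in [set: int]] x by rewrite hm.
move=> /(_ [set y | U (y - x)]) [].
  by apply: open_nbhs_nbhs; split; [exact: open_transl | rewrite /= subrr].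
by move=> y [[n _ <-]] /=; rewrite /transl_pow add0r => ?; exists n.
Qed.

Lemma key (R : realType) (Om : topologicalZmodType) (w0 : Om) (d : seqZ R)
  (psi : Om -> seqZ R) (a : Om) :
  minimal_translation w0 -> limit_periodic d -> continuous psi ->
  (forall k, psi (a *~ k) = zshift k d) ->
  (forall w, closure (range (fun k => a *~ k)) w) ->
  forall e : R, 0 < e -> exists U : set Om,
    [/\ open U, subgrp U & forall m : int, U (w0 *~ m) -> forall n, `|d (n + m) - d n| <= e].
Proof.
move=> hm lp cpsi hpsi hdense e e0.
have [p [pp hp]] := lp (e / 2) ltac:(by rewrite divr_gt0).
have [L [L0 hL]] := period_exists pp.
pose P := [set m : int | forall n, p (n + m) = p n].
have sP : subgrp P.
  split; first by move=> n; rewrite addr0.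
  move=> x y Px Py n; have -> : n + (x - y) = (n - y) + x by ring.
  by rewrite Px -(Py (n - y)) subrK.
pose S := [set a *~ m | m in P].
have sS : subgrp S.
  split; first by exists 0 => //; exact: sP.1.
  move=> _ _ [x Px <-] [y Py <-]; exists (x - y); first exact: sP.2.
  by rewrite mulrzBr.
pose U := closure S.
have sU : subgrp U := closure_subgrp sS.
have bnd : forall x, U x -> forall n, `|psi x n - d n| <= e.
  move=> x Ux; apply: (img_closure (f := psi) (B := [set y : seqZ R | forall n, `|y n - d n| <= e])) Ux => //.
    exact: closed_C.
  move=> _ [m Pm <-] n; rewrite hpsi /zshift.
  have h1 := hp (n + m); have h2 := hp n; rewrite Pm in h1.
  have -> : d (n + m) - d n = (d (n + m) - p n) + (p n - d n) by ring.
  apply: le_trans (ler_normD _ _) _; rewrite (distrC (p n)); lra.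
pose N := `|L|%N.
have cover : forall k : int, exists2 j : nat, (j < N)%N & U (a *~ k - a *~ j).
  move=> k; have m0 := modz_ge0 k L0.
  have hr : (`|(k %% L)%Z|%N)%:Z = (k %% L)%Z by rewrite gez0_abs.
  exists `|(k %% L)%Z|%N.
    by rewrite -ltz_nat hr /N abszE; exact: ltz_mod.
  rewrite hr -mulrzBr; apply: subset_closure; exists ((k %/ L)%Z * L) => //.
    have := subgrpMz (k %/ L)%Z sP hL; rewrite -mulrzr intz mulrC; exact.
  by congr (_ *~ _); rewrite [X in _ = X - _](divz_eq k L) addrK.
have cov2 : forall x, exists2 j : nat, (j < N)%N & U (x - a *~ j).
  move=> x.
  have cB : closed (\bigcup_(j in `I_N) [set y | U (y - a *~ (j:nat))]).
    apply: closed_bigcup => [|j _]; [exact: finite_II | apply: closed_transl; exact: closed_closure].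
  have : (\bigcup_(j in `I_N) [set y | U (y - a *~ (j:nat))]) x.
    rewrite ((closure_id _).1 cB); move: (hdense x); apply: closureS.
    by move=> _ [k _ <-]; have [j jN Uj] := cover k; exists j.
  by case=> j /= jN Uj; exists j.
have oU : open U.
  rewrite -closedC.
  have -> : ~` U = \bigcup_(j in [set j : nat | (j < N)%N /\ ~ U (a *~ j)]) [set y | U (y - a *~ (j:nat))].
    apply/seteqP; split.
      move=> x nUx; have [j jN Uj] := cov2 x; exists j => //; split => // Uaj; apply: nUx.
      by have := subgrpD sU Uj Uaj; rewrite subrK.
    move=> x [j [_ nUaj] Uxj] Ux; apply: nUaj.
    by have := sU.2 _ _ Ux Uxj; rewrite opprB addrC subrK.
  apply: closed_bigcup => [|j _]; last by apply: closed_transl; exact: closed_closure.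
  by apply: sub_finite_set (finite_II N) => j [].
have [s Us] := dense_w0 a hm oU sU.1.
exists U; split => // m Um n.
have Uam : U (a *~ m).
  have -> : a *~ m = (w0 *~ m) *~ s - (w0 *~ s - a) *~ m.
    by rewrite mulrzBl -!mulrzA [s * m]mulrC opprB addrC subrK.
  by apply: sU.2; [apply: (subgrpMz _ sU Um) | apply: (subgrpMz _ sU Us)].
by have := bnd _ Uam n; rewrite hpsi /zshift.
Qed.

Lemma archi_inv (R : realType) (e : R) : 0 < e -> exists n : nat, n.+1%:R^-1 < e.
Proof.
move=> e0; have [N _ hN] := near_infty_natSinv_lt (PosNum e0).
by exists N; apply: hN => /=.
Qed.

Lemma extend (R : realType) (Om : topologicalZmodType) (w0 : Om) (g : int -> R)
  (V : nat -> set Om) :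
  minimal_translation w0 -> (forall n, open (V n) /\ subgrp (V n)) ->
  (forall n m, (n <= m)%N -> V m `<=` V n) ->
  (forall n j k, V n (w0 *~ j - w0 *~ k) -> `|g j - g k| <= n.+1%:R^-1) ->
  exists f : Om -> R^o, continuous f /\ forall k, f (w0 *~ k) = g k.
Proof.
move=> hm hV hmono hg.
pose E (n : nat) : R := n.+1%:R^-1.
have E0 : forall n, 0 < E n by move=> n; rewrite /E invr_gt0 ltr0n.
have wit : forall n x, exists j, V n (w0 *~ j - x).
  by move=> n x; apply: dense_w0 => //; [exact: (hV n).1 | exact: (hV n).2.1].
have cmp : forall x n j m j', V n (w0 *~ j - x) -> V m (w0 *~ j' - x) ->
    g j - E n <= g j' + E m.
  move=> x n j m j' Vn Vm.
  have diffin : forall k, V k (w0 *~ j - x) -> V k (w0 *~ j' - x) -> `|g j' - g j| <= E k.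
    move=> k h1 h2; apply: hg; have := (hV k).2.2 _ _ h2 h1.
    by rewrite opprB addrA subrK.
  have En := E0 n; have Em := E0 m.
  case: (leqP n m) => hnm.
    have := diffin n Vn (hmono _ _ hnm _ Vm); rewrite ler_norml => /andP[h1 h2]; lra.
  have := diffin m (hmono _ _ (ltnW hnm) _ Vn) Vm; rewrite ler_norml => /andP[h1 h2]; lra.
pose T x := [set r : R | exists n j, V n (w0 *~ j - x) /\ r = g j + E n].
pose f (x : Om) : R^o := inf (T x).
have fb : forall x n j, V n (w0 *~ j - x) -> `|f x - g j| <= E n.
  move=> x n j Vn.
  have lb : lbound (T x) (g j - E n).
    by move=> _ [m [j' [Vm ->]]]; exact: cmp Vn Vm.
  have h1 : f x <= g j + E n.
    apply: ge_inf; first by exists (g j - E n).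
    by exists n, j.
  have h2 : g j - E n <= f x by apply: lb_le_inf => //; exists (g j + E n), n, j.
  rewrite ler_norml; apply/andP; split; lra.
exists f; split.
  move=> x; apply/cvgrPdist_le => eps eps0.
  have [n hn] := archi_inv (ltac:(by rewrite divr_gt0) : 0 < eps / 2).
  apply: (@filterS _ _ _ [set y | V n (y - x)]).
    move=> y Vy; have [j Vj] := wit n y.
    have Vjx : V n (w0 *~ j - x).
      by have := subgrpD (hV n).2 Vj Vy; rewrite addrA subrK.
    have := fb _ _ _ Vj; have := fb _ _ _ Vjx; rewrite /E in hn.
    rewrite !ler_norml => /andP[a1 a2] /andP[b1 b2].
    rewrite /E in a1 a2 b1 b2; move: (n.+1%:R^-1) hn a1 a2 b1 b2 => q hn a1 a2 b1 b2; move: (f x) (f y) a1 a2 b1 b2 => u v a1 a2 b1 b2; apply/andP; split; lra.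
  apply: open_nbhs_nbhs; split; first exact: open_transl (hV n).1.
  by rewrite /= subrr; exact: (hV n).2.1.
move=> k.
have hk : forall n, `|f (w0 *~ k) - g k| <= E n.
  by move=> n; have := fb (w0 *~ k) n k; rewrite subrr; apply; exact: (hV n).2.1.
move: (f (w0 *~ k)) hk => u hk.
apply/eqP; rewrite -subr_eq0; apply/negPn/negP => hne.
have [n hn] := archi_inv (ltac:(by rewrite normr_gt0) : 0 < `|u - g k|).
by have := hk n; rewrite /E leNgt hn.
Qed.

Fixpoint nestU (T : Type) (U : nat -> set T) (n : nat) : set T :=
  if n is m.+1 then nestU U m `&` U m.+1 else U 0%N.

Lemma nestU_sub (T : Type) (U : nat -> set T) n : nestU U n `<=` U n.
Proof. by case: n => [|n] //= x []. Qed.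

Lemma nestU_mono (T : Type) (U : nat -> set T) n m : (n <= m)%N -> nestU U m `<=` nestU U n.
Proof.
elim: m => [|m IH]; first by rewrite leqn0 => /eqP ->.
rewrite leq_eqVlt => /orP[/eqP -> //|]; rewrite ltnS => /IH h x [/h].
by [].
Qed.

Lemma nestU_ok (Om : topologicalZmodType) (U : nat -> set Om) n :
  (forall n, open (U n) /\ subgrp (U n)) -> open (nestU U n) /\ subgrp (nestU U n).
Proof.
move=> hU; elim: n => [|n [oN sN]] //=; split; first by apply: openI => //; exact: (hU _).1.
split; first by split; [exact: sN.1 | exact: (hU _).2.1].
by move=> x y [x1 x2] [y1 y2]; split; [exact: sN.2 | exact: (hU _).2.2].
Qed.

Theorem theorem4p5 (R : realType) (Om : topologicalZmodType) (w0 : Om) :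
  cantor_group Om -> minimal_translation w0 ->
  forall d : seqZ R, linfty d -> limit_periodic d ->
  forall (hop : seqZ R -> seqZ R -> seqZ R) (hinv : seqZ R -> seqZ R),
  (forall x y, hull d x -> hull d y -> hull d (hop x y)) ->
  (forall x, hull d x -> hull d (hinv x)) ->
  {within hull d `*` hull d, continuous (fun p => hop p.1 p.2)} ->
  {within hull d, continuous hinv} ->
  (forall x y z, hull d x -> hull d y -> hull d z ->
     hop x (hop y z) = hop (hop x y) z) ->
  (forall x, hull d x -> hop d x = x) ->
  (forall x, hull d x -> hop (hinv x) x = d) ->
  (forall j k : int, hop (zshift j d) (zshift k d) = zshift (j + k) d) ->
  (exists (phi : seqZ R -> Om) (psi : Om -> seqZ R),
     [/\ {within hull d, continuous phi}, continuous psi,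
         (forall w, hull d (psi w)),
         (forall w, phi (psi w) = w) /\ (forall x, hull d x -> psi (phi x) = x)
       & forall x y, hull d x -> hull d y -> phi (hop x y) = phi x + phi y]) ->
  exists f : Om -> R^o, continuous f /\
    forall n : int, f (transl_pow w0 n 0) = d n.
Proof.
move=> _ hm d _ hlp hop hinv _ _ _ _ _ _ _ hhom [phi [psi [cphi cpsi hpsi [pp1 pp2] hphi]]].
have hz : forall k, hull d (zshift k d).
  by move=> k; apply: subset_closure; exists k.
pose a := phi (zshift 1 d).
have phom : forall k, phi (zshift k d) = a *~ k.
  apply: (hom_int (g := fun k => phi (zshift k d))) => j k.
  by rewrite -hhom hphi.
have hpa : forall k, psi (a *~ k) = zshift k d by move=> k; rewrite -phom pp2.
have hdense := dense_a cphi hpsi pp1 phom.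
have hU : forall n : nat, exists U : set Om,
    [/\ open U, subgrp U & forall m : int, U (w0 *~ m) -> forall k, `|d (k + m) - d k| <= n.+1%:R^-1].
  by move=> n; apply: key => //; rewrite invr_gt0 ltr0n.
have [U hU'] := choice hU.
have hg : forall n j k, nestU U n (w0 *~ j - w0 *~ k) -> `|d j - d k| <= n.+1%:R^-1.
  move=> n j k; rewrite -mulrzBr => /(@nestU_sub _ U n).
  by case: (hU' n) => _ _ /[apply] /(_ k); have -> : k + (j - k) = j by ring.
have [f [cf hf]] := extend (g := d) (V := nestU U) hm
  (fun n => @nestU_ok _ U n (fun n => let: And3 o s _ := hU' n in conj o s))
  (fun n m h => @nestU_mono _ U n m h) hg.
exists f; split => // n; by rewrite /transl_pow add0r hf.
Qed.
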